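(* Let $b>0$ and $\psi,x_0,x_\infty$ be as in the context. Then $(x-c)\psi'(x)-\psi(x)<0$ for all $x<x_0$, and $(x-c)\psi''(x)-\psi'(x)>0$ for all $x>x_\infty$.
   Context: Constants: $a\in\mathbb{R}$, $b>0$, $\sigma>0$, $\rho>0$, $c>0$. For $\beta<0$, let $D_\beta(x)=\frac{e^{-x^2/4}}{\Gamma(-\beta)}\int_0^\infty t^{-\beta-1}e^{-t^2/2-xt}\,dt$, and $\psi(x)=e^{\frac{(bx-a)^2}{2\sigma^2 b}}D_{-\rho/b}\big(-\frac{bx-a}{\sigma b}\sqrt{2b}\big)$, the positive strictly increasing fundamental solution of $\frac12\sigma^2u''+(a-bx)u'-\rho u=0$. Let $x_0$ be the unique solution on $(c,\infty)$ of $(x-c)\psi'(x)-\psi(x)=0$ and $x_\infty$ the unique solution on $(c,\infty)$ of $(x-c)\psi''(x)-\psi'(x)=0$. *)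

(* Defs.v *)
From Stdlib Require Import Reals.
From Coquelicot Require Import Coquelicot.
Open Scope R_scope.

Definition Gamma_fn (s : R) : R :=
  RInt_gen (fun t => Rpower t (s - 1) * exp (- t)) (at_right 0) (Rbar_locally p_infty).

(* Parabolic cylinder function, integral representation valid for beta < 0:
   D_beta(x) = e^{-x^2/4}/Gamma(-beta) * \int_0^\infty t^{-beta-1} e^{-t^2/2 - x t} dt. *)
Definition D_par (beta x : R) : R :=
  exp (- x ^ 2 / 4) / Gamma_fn (- beta) *
  RInt_gen (fun t => Rpower t (- beta - 1) * exp (- t ^ 2 / 2 - x * t))
           (at_right 0) (Rbar_locally p_infty).

Definition psi (a b sigma rho : R) (x : R) : R :=
  exp ((b * x - a) ^ 2 / (2 * sigma ^ 2 * b)) *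
  D_par (- rho / b) (- (b * x - a) / (sigma * b) * sqrt (2 * b)).

(* Main.v *)
Require Import Defs.
From Stdlib Require Import Reals.
From Coquelicot Require Import Coquelicot.
From Stdlib Require Import Lra FunctionalExtensionality Classical_Prop.
Open Scope R_scope.

Lemma RInt_nonneg_mono (h : R -> R) a a0 b0 b :
  0 < a -> a <= a0 -> a0 < b0 -> b0 <= b ->
  (forall t, 0 < t -> continuous h t) -> (forall t, 0 < t -> 0 <= h t) ->
  RInt h a0 b0 <= RInt h a b.
Proof.
  intros Ha Ha0 Hab Hb Hc Hp.
  assert (Ex : forall u v, 0 < u -> u <= v -> ex_RInt h u v).
  { intros u v Hu Huv. apply (ex_RInt_continuous (V:=R_CompleteNormedModule)). intros z Hz.
    apply Hc. rewrite Rmin_left in Hz by lra. lra. }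
  rewrite <- (RInt_Chasles h a a0 b) by (apply Ex; lra).
  rewrite <- (RInt_Chasles h a0 b0 b) by (apply Ex; lra).
  assert (0 <= RInt h a a0) by (apply RInt_ge_0; [lra| apply Ex; lra| intros; apply Hp; lra]).
  assert (0 <= RInt h b0 b) by (apply RInt_ge_0; [lra| apply Ex; lra| intros; apply Hp; lra]).
  unfold plus; simpl. lra.
Qed.

Lemma gen_exist (h : R -> R) (B : R) :
  (forall t, 0 < t -> continuous h t) -> (forall t, 0 < t -> 0 <= h t) ->
  (forall a b, 0 < a -> a < b -> RInt h a b <= B) ->
  exists L, is_RInt_gen h (at_right 0) (Rbar_locally p_infty) L /\
            (forall a b, 0 < a -> a < b -> RInt h a b <= L).
Proof.
  intros Hc Hp HB.
  set (E := fun y => exists a b, 0 < a /\ a < b /\ y = RInt h a b).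
  assert (HbE : bound E).
  { exists B. intros y [a [b [H1 [H2 ->]]]]. apply HB; lra. }
  assert (HnE : exists y, E y).
  { exists (RInt h 1 2), 1, 2. repeat split; lra. }
  destruct (completeness E HbE HnE) as [L [HL1 HL2]].
  exists L. split.
  2: { intros a b Ha Hab. apply HL1. exists a, b. repeat split; lra. }
  intros P [eps HP].
  assert (Hex : exists a0 b0, 0 < a0 /\ a0 < b0 /\ L - eps < RInt h a0 b0).
  { destruct (Classical_Prop.classic (exists a0 b0, 0 < a0 /\ a0 < b0 /\ L - eps < RInt h a0 b0)) as [H|H]; auto.
    exfalso. assert (L <= L - eps).
    { apply HL2. intros y [a [b [H1 [H2 ->]]]].
      destruct (Rle_or_lt (RInt h a b) (L - eps)) as [H3|H3]; auto.
      exfalso; apply H; exists a, b; auto. }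
    destruct eps as [e he]; simpl in *; lra. }
  destruct Hex as [a0 [b0 [Ha0 [Hab0 Hlt]]]].
  unfold filtermapi.
  apply (Filter_prod _ _ _ (fun a => 0 < a < a0) (fun b => b0 < b)).
  - exists (mkposreal a0 Ha0). intros y Hy Hy0.
    unfold ball in Hy; simpl in Hy; unfold AbsRing_ball, abs, minus, plus, opp in Hy; simpl in Hy.
    split; [lra|]. apply Rabs_lt_between in Hy. lra.
  - exists b0. auto.
  - intros a b [Ha Ha'] Hb. simpl. exists (RInt h a b). split.
    + apply (RInt_correct (V:=R_CompleteNormedModule)). apply (ex_RInt_continuous (V:=R_CompleteNormedModule)). intros z Hz. apply Hc.
      rewrite Rmin_left in Hz by lra. lra.
    + apply HP. unfold ball; simpl; unfold AbsRing_ball, abs, minus, plus, opp; simpl.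
      assert (RInt h a0 b0 <= RInt h a b) by (apply RInt_nonneg_mono; auto; lra).
      assert (RInt h a b <= L) by (apply HL1; exists a, b; repeat split; lra).
      apply Rabs_lt_between. destruct eps; simpl in *; lra.
Qed.
Lemma Rpower_m1 t nu : 0 < t -> Rpower t (nu - 1) = exp (nu * ln t) / t.
Proof. intros Ht. unfold Rpower. replace ((nu - 1) * ln t) with (nu * ln t + - ln t) by ring.
  rewrite exp_plus, exp_Ropp, exp_ln by auto. reflexivity. Qed.

Lemma P_deriv nu t : 0 < t ->
  is_derive (fun t => - / (1 + Rpower t nu)) t (nu * Rpower t (nu - 1) / (1 + Rpower t nu)^2).
Proof.
  intros Ht. unfold Rpower. pose proof (exp_pos (nu * ln t)). auto_derive.
  - repeat split; auto. lra.
  - replace (exp ((nu-1)*ln t)) with (exp (nu*ln t)/t) by (symmetry; exact (Rpower_m1 t nu Ht)).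
    field. lra.
Qed.

Lemma cont_Rpower p t : 0 < t -> continuous (fun t => Rpower t p) t.
Proof. intros Ht. apply (ex_derive_continuous (K:=R_AbsRing) (V:=R_NormedModule)). unfold Rpower. auto_derive. auto. Qed.

Lemma dom_exist nu K phi : 0 < nu ->
  (forall t, 0 < t -> continuous phi t) -> (forall t, 0 < t -> 0 <= phi t) ->
  (forall t, 0 < t -> phi t * (1 + Rpower t nu)^2 <= K) ->
  exists L, is_RInt_gen (fun t => Rpower t (nu - 1) * phi t) (at_right 0) (Rbar_locally p_infty) L /\
    (forall a b, 0 < a -> a < b -> RInt (fun t => Rpower t (nu - 1) * phi t) a b <= L).
Proof.
  intros Hnu Hc Hp HK.
  assert (HK0 : 0 <= K).
  { specialize (HK 1 Rlt_0_1). specialize (Hp 1 Rlt_0_1).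
    assert (0 <= phi 1 * (1 + Rpower 1 nu)^2) by (apply Rmult_le_pos; auto; apply pow2_ge_0). lra. }
  assert (Hch : forall t, 0 < t -> continuous (fun t => Rpower t (nu - 1) * phi t) t).
  { intros t Ht. apply (continuous_mult (fun t => Rpower t (nu-1)) phi); auto. apply cont_Rpower; auto. }
  apply (gen_exist _ (K / nu)); auto.
  - intros t Ht. apply Rmult_le_pos; auto. unfold Rpower; pose proof (exp_pos ((nu-1)*ln t)); lra.
  - intros a b Ha Hab.
    set (dP := fun t => nu * Rpower t (nu - 1) / (1 + Rpower t nu)^2).
    assert (HcdP : forall t, 0 < t -> continuous dP t).
    { intros t Ht. apply (ex_derive_continuous (K:=R_AbsRing) (V:=R_NormedModule)). unfold dP, Rpower.
      pose proof (exp_pos (nu * ln t)). auto_derive. repeat split; auto; intro; nra. }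
    assert (HI : is_RInt dP a b (minus (- / (1 + Rpower b nu)) (- / (1 + Rpower a nu)))).
    { apply (is_RInt_derive (fun t => - / (1 + Rpower t nu))).
      - intros x Hx. rewrite Rmin_left in Hx by lra. apply P_deriv. lra.
      - intros x Hx. rewrite Rmin_left in Hx by lra. apply HcdP. lra. }
    assert (HI2 : is_RInt (fun t => K / nu * dP t) a b (scal (K/nu) (minus (- / (1 + Rpower b nu)) (- / (1 + Rpower a nu))))).
    { exact (is_RInt_scal _ _ _ _ _ HI). }
    assert (Hle : RInt (fun t => Rpower t (nu - 1) * phi t) a b <= RInt (fun t => K / nu * dP t) a b).
    { apply RInt_le. lra.
      - apply (ex_RInt_continuous (V:=R_CompleteNormedModule)). intros z Hz.
        rewrite Rmin_left in Hz by lra. apply Hch. lra.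
      - eexists; exact HI2.
      - intros x Hx. unfold dP. assert (Hx0 : 0 < x) by lra.
        pose proof (exp_pos (nu * ln x)) as E1.
        pose proof (exp_pos ((nu-1) * ln x)) as E2.
        change (Rpower x nu) with (exp (nu * ln x)).
        change (Rpower x (nu-1)) with (exp ((nu-1) * ln x)).
        specialize (HK x Hx0). change (Rpower x nu) with (exp (nu * ln x)) in HK.
        set (q := (1 + exp (nu * ln x))^2) in *.
        assert (Hq : 0 < q) by (unfold q; apply pow_lt; lra).
        assert (phi x <= K / q).
        { apply (Rmult_le_reg_r q); auto. unfold Rdiv. rewrite Rmult_assoc, Rinv_l by lra. lra. }
        replace (K / nu * (nu * exp ((nu - 1) * ln x) / q)) with (exp ((nu - 1) * ln x) * (K / q)) by (field; lra).
        apply Rmult_le_compat_l; lra. }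
    rewrite (is_RInt_unique _ _ _ _ HI2) in Hle.
    unfold minus, plus, opp, scal in Hle; simpl in Hle. unfold mult in Hle; simpl in Hle.
    assert (Hb1 : 0 < / (1 + Rpower b nu)).
    { apply Rinv_0_lt_compat. unfold Rpower; pose proof (exp_pos (nu * ln b)); lra. }
    assert (Ha1 : / (1 + Rpower a nu) < 1).
    { unfold Rpower; pose proof (exp_pos (nu * ln a)). rewrite <- Rinv_1. apply Rinv_lt_contravar; lra. }
    assert (K / nu * (- / (1 + Rpower b nu) + - - / (1 + Rpower a nu)) <= K / nu * 1).
    { apply Rmult_le_compat_l. apply Rdiv_le_0_compat; lra. lra. }
    lra.
Qed.

Lemma exp_taylor_bound u : Rabs (exp u - 1 - u) <= u^2 * exp (Rabs u).
Proof.
  pose proof (exp_ineq1_le u) as E1. pose proof (exp_ineq1_le (-u)) as E2.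
  pose proof (exp_pos u). pose proof (exp_pos (-u)).
  assert (Hm : exp u * exp (- u) = 1) by (rewrite <- exp_plus; replace (u + - u) with 0 by ring; apply exp_0).
  destruct (Rle_or_lt 0 u) as [Hu|Hu].
  - rewrite (Rabs_right u) by lra. rewrite Rabs_right by lra.
    assert (HH : exp u * (1 - u) <= exp u * exp (-u)) by (apply Rmult_le_compat_l; lra).
    rewrite Hm in HH. assert (exp u - 1 <= u * exp u) by lra.
    assert (u*(exp u - 1) <= u*(u*exp u)) by (apply Rmult_le_compat_l; lra).
    assert (u * 1 <= u * exp u) by (apply Rmult_le_compat_l; lra). simpl. nra.
  - rewrite (Rabs_left u) by lra. rewrite Rabs_right by lra.
    assert (HH : exp u * (1 - u) <= exp u * exp (-u)) by (apply Rmult_le_compat_l; lra).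
    rewrite Hm in HH.
    assert (H3 : exp u - 1 - u <= - u * (1 - exp u)) by lra.
    assert (H4 : -u * (1 - exp u) <= -u * (-u)) by (apply Rmult_le_compat_l; lra).
    assert (H5 : u * u * 1 <= u * u * exp (-u)) by (apply Rmult_le_compat_l; nra).
    simpl. lra.
Qed.

Lemma ln_lt_self t : 0 < t -> ln t < t.
Proof. intros Ht. apply exp_lt_inv. rewrite exp_ln by auto. pose proof (exp_ineq1_le t).
  assert (1 + t <= exp t) by auto. lra. Qed.


Lemma pow_le_exp t n : 0 < t -> t ^ n <= exp (INR n * t).
Proof.
  intros Ht. induction n.
  - simpl. rewrite Rmult_0_l, exp_0. lra.
  - rewrite S_INR. replace ((INR n + 1) * t) with (t + INR n * t) by ring. rewrite exp_plus.
    simpl. apply Rmult_le_compat; try lra. apply pow_le; lra.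
    pose proof (exp_ineq1_le t); lra.
Qed.

Lemma exp_le x y : x <= y -> exp x <= exp y.
Proof. intros H; destruct (Rle_lt_or_eq_dec x y H) as [H'|H']. left; apply exp_increasing; auto. subst; lra. Qed.

Lemma phi_bound nu k n t : 0 < nu -> 0 < t ->
  t ^ n * exp (- t ^ 2 / 2 + k * t) * (1 + Rpower t nu) ^ 2
  <= 4 * exp ((Rabs k + INR n + 2 * nu) ^ 2 / 2).
Proof.
  intros Hnu Ht. set (A := Rabs k + INR n + 2 * nu).
  assert (H1 : Rpower t nu <= exp (nu * t)).
  { unfold Rpower. apply exp_le. apply Rmult_le_compat_l; try lra. pose proof (ln_lt_self t Ht); lra. }
  assert (H2 : 1 <= exp (nu * t)).
  { rewrite <- exp_0. apply exp_le. nra. }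
  assert (H0 : 0 <= Rpower t nu) by (unfold Rpower; pose proof (exp_pos (nu * ln t)); lra).
  assert (H3 : (1 + Rpower t nu) ^ 2 <= 4 * exp (2 * nu * t)).
  { replace (2 * nu * t) with (nu * t + nu * t) by ring. rewrite exp_plus. simpl. nra. }
  assert (H4 : t ^ n <= exp (INR n * t)) by (apply pow_le_exp; auto).
  assert (H5 : 0 <= t ^ n) by (apply pow_le; lra).
  pose proof (exp_pos (- t ^ 2 / 2 + k * t)) as P1.
  pose proof (exp_pos (INR n * t)) as P2.
  pose proof (exp_pos (2 * nu * t)) as P3.
  apply Rle_trans with (exp (INR n * t) * exp (- t ^ 2 / 2 + k * t) * (4 * exp (2 * nu * t))).
  { apply Rmult_le_compat; try nra. }
  replace (exp (INR n * t) * exp (- t ^ 2 / 2 + k * t) * (4 * exp (2 * nu * t)))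
    with (4 * exp (INR n * t + (- t ^ 2 / 2 + k * t) + 2 * nu * t))
    by (rewrite !exp_plus; ring).
  apply Rmult_le_compat_l; try lra. apply exp_le.
  assert (k <= Rabs k) by apply RRle_abs.
  assert (k * t <= Rabs k * t) by (apply Rmult_le_compat_r; lra).
  assert (0 <= (t - A)^2) by apply pow2_ge_0.
  unfold A in *. nra.
Qed.

Lemma gamma_bound nu t : 0 < nu -> 0 < t ->
  exp (- t) * (1 + Rpower t nu) ^ 2 <= (1 + exp (nu * ln (4 * nu))) ^ 2.
Proof.
  intros Hnu Ht. set (C := exp (nu * ln (4 * nu))).
  assert (HC : 0 < C) by apply exp_pos.
  assert (H1 : Rpower t nu <= C * exp (t / 4)).
  { unfold Rpower, C. rewrite <- exp_plus. apply exp_le.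
    assert (Hq : 0 < 4 * nu) by lra.
    replace t with ((4 * nu) * (t / (4 * nu))) at 1 by (field; lra).
    rewrite ln_mult by (try apply Rdiv_lt_0_compat; lra).
    pose proof (ln_lt_self (t / (4 * nu)) ltac:(apply Rdiv_lt_0_compat; lra)).
    assert (nu * ln (t / (4 * nu)) <= nu * (t / (4 * nu))) by (apply Rmult_le_compat_l; lra).
    replace (nu * (t / (4 * nu))) with (t / 4) in * by (field; lra). nra. }
  assert (H2 : 1 <= exp (t / 4)) by (rewrite <- exp_0; apply exp_le; lra).
  assert (H0 : 0 <= Rpower t nu) by (unfold Rpower; pose proof (exp_pos (nu * ln t)); lra).
  assert (H3 : 1 + Rpower t nu <= (1 + C) * exp (t / 4)) by nra.
  assert (H4 : (1 + Rpower t nu) ^ 2 <= (1 + C) ^ 2 * exp (t / 2)).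
  { replace (t / 2) with (t / 4 + t / 4) by field. rewrite exp_plus.
    replace ((1 + C) ^ 2 * (exp (t / 4) * exp (t / 4))) with (((1 + C) * exp (t / 4)) ^ 2) by ring.
    apply pow_incr. lra. }
  assert (H5 : exp (- t) * exp (t / 2) <= 1).
  { rewrite <- exp_plus, <- exp_0. apply exp_le. lra. }
  pose proof (exp_pos (- t)). pose proof (exp_pos (t/2)).
  apply Rle_trans with (exp (- t) * ((1 + C) ^ 2 * exp (t / 2))).
  { apply Rmult_le_compat_l; lra. }
  assert (0 <= (1 + C) ^ 2) by apply pow2_ge_0. nra.
Qed.

Definition ig nu n k t := Rpower t (nu - 1) * (t ^ n * exp (- t ^ 2 / 2 + k * t)).
Definition Iint nu n k := RInt_gen (ig nu n k) (at_right 0) (Rbar_locally p_infty).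

Lemma pos_from_dom nu phi L : 0 < nu ->
  (forall t, 0 < t -> continuous phi t) -> (forall t, 0 < t -> 0 < phi t) ->
  (forall a b, 0 < a -> a < b -> RInt (fun t => Rpower t (nu - 1) * phi t) a b <= L) -> 0 < L.
Proof.
  intros Hnu Hc Hp HL. eapply Rlt_le_trans; [|apply (HL 1 2); lra].
  apply RInt_gt_0. lra.
  - intros x Hx. apply Rmult_lt_0_compat. unfold Rpower; apply exp_pos. apply Hp; lra.
  - intros x Hx. apply (continuous_mult (fun t => Rpower t (nu-1)) phi).
    apply cont_Rpower; lra. apply Hc; lra.
Qed.

Lemma I_spec nu n k : 0 < nu ->
  is_RInt_gen (ig nu n k) (at_right 0) (Rbar_locally p_infty) (Iint nu n k) /\ 0 < Iint nu n k.
Proof.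
  intros Hnu.
  set (phi := fun t => t ^ n * exp (- t ^ 2 / 2 + k * t)).
  assert (Hc : forall t, 0 < t -> continuous phi t).
  { intros t Ht. apply (ex_derive_continuous (K:=R_AbsRing) (V:=R_NormedModule)). unfold phi. auto_derive. auto. }
  assert (Hp : forall t, 0 < t -> 0 < phi t).
  { intros t Ht. unfold phi. apply Rmult_lt_0_compat. apply pow_lt; auto. apply exp_pos. }
  destruct (dom_exist nu (4 * exp ((Rabs k + INR n + 2 * nu) ^ 2 / 2)) phi Hnu Hc)
    as [L [HL1 HL2]].
  - intros t Ht; left; auto.
  - intros t Ht. unfold phi. apply phi_bound; auto.
  - assert (HI : Iint nu n k = L).
    { apply is_RInt_gen_unique. exact HL1. }
    rewrite HI. split. exact HL1. eapply pos_from_dom; eauto.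
Qed.

Definition Gint nu := RInt_gen (fun t => Rpower t (nu - 1) * exp (- t)) (at_right 0) (Rbar_locally p_infty).

Lemma G_pos nu : 0 < nu -> 0 < Gint nu.
Proof.
  intros Hnu.
  assert (Hc : forall t, 0 < t -> continuous (fun t => exp (- t)) t).
  { intros t Ht. apply (ex_derive_continuous (K:=R_AbsRing) (V:=R_NormedModule)). auto_derive. auto. }
  destruct (dom_exist nu ((1 + exp (nu * ln (4 * nu))) ^ 2) (fun t => exp (- t)) Hnu Hc)
    as [L [HL1 HL2]].
  - intros t Ht; left; apply exp_pos.
  - intros t Ht. apply gamma_bound; auto.
  - assert (HI : Gint nu = L) by (apply is_RInt_gen_unique; exact HL1).
    rewrite HI. eapply pos_from_dom; eauto. intros; apply exp_pos.
Qed.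

Lemma ig_pointwise nu n k h x : 0 < x -> Rabs h <= 1 ->
  Rabs (ig nu n (k + h) x - ig nu n k x - h * ig nu (S n) k x) <= h ^ 2 * ig nu (S (S n)) (k + 1) x.
Proof.
  intros Hx Hh. unfold ig.
  assert (HW : 0 <= Rpower x (nu - 1) * (x ^ n * exp (- x ^ 2 / 2 + k * x))).
  { apply Rmult_le_pos. unfold Rpower; left; apply exp_pos.
    apply Rmult_le_pos. apply pow_le; lra. left; apply exp_pos. }
  replace (Rpower x (nu - 1) * (x ^ n * exp (- x ^ 2 / 2 + (k + h) * x)) -
     Rpower x (nu - 1) * (x ^ n * exp (- x ^ 2 / 2 + k * x)) -
     h * (Rpower x (nu - 1) * (x ^ S n * exp (- x ^ 2 / 2 + k * x))))
    with (Rpower x (nu - 1) * (x ^ n * exp (- x ^ 2 / 2 + k * x)) * (exp (h * x) - 1 - h * x))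
    by (replace (- x ^ 2 / 2 + (k + h) * x) with ((- x ^ 2 / 2 + k * x) + h * x) by ring;
        rewrite (exp_plus (- x ^ 2 / 2 + k * x) (h * x)); change (x ^ S n) with (x * x ^ n); ring).
  replace (h ^ 2 * (Rpower x (nu - 1) * (x ^ S (S n) * exp (- x ^ 2 / 2 + (k + 1) * x))))
    with (Rpower x (nu - 1) * (x ^ n * exp (- x ^ 2 / 2 + k * x)) * ((h * x) ^ 2 * exp x))
    by (replace (- x ^ 2 / 2 + (k + 1) * x) with ((- x ^ 2 / 2 + k * x) + x) by ring;
        rewrite (exp_plus (- x ^ 2 / 2 + k * x) x); change (x ^ S (S n)) with (x * (x * x ^ n)); ring).
  rewrite Rabs_mult, (Rabs_right (Rpower x (nu - 1) * (x ^ n * exp (- x ^ 2 / 2 + k * x)))) by lra.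
  apply Rmult_le_compat_l; auto.
  eapply Rle_trans; [apply exp_taylor_bound|].
  apply Rmult_le_compat_l; [apply pow2_ge_0|]. apply exp_le.
  rewrite Rabs_mult, (Rabs_right x) by lra. nra.
Qed.

Lemma I_bound nu n k h : 0 < nu -> Rabs h <= 1 ->
  Rabs (Iint nu n (k + h) - Iint nu n k - h * Iint nu (S n) k) <= h ^ 2 * Iint nu (S (S n)) (k + 1).
Proof.
  intros Hnu Hh.
  destruct (I_spec nu n (k + h) Hnu) as [A _].
  destruct (I_spec nu n k Hnu) as [B _].
  destruct (I_spec nu (S n) k Hnu) as [C _].
  destruct (I_spec nu (S (S n)) (k + 1) Hnu) as [D _].
  pose proof (is_RInt_gen_minus _ _ _ _ (is_RInt_gen_minus _ _ _ _ A B) (is_RInt_gen_scal _ h _ C)) as H1.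
  pose proof (is_RInt_gen_scal _ (h ^ 2) _ D) as H2.
  assert (Hfp : forall P : R * R -> Prop, (forall a b, 0 < a < 1 -> 1 < b -> P (a, b)) ->
            filter_prod (at_right 0) (Rbar_locally p_infty) P).
  { intros P HP. apply (Filter_prod _ _ _ (fun a => 0 < a < 1) (fun b => 1 < b)).
    - exists (mkposreal 1 Rlt_0_1). intros y Hy Hy0.
      unfold ball in Hy; simpl in Hy; unfold AbsRing_ball, abs, minus, plus, opp in Hy; simpl in Hy.
      split; [lra|]. apply Rabs_lt_between in Hy. lra.
    - exists 1. auto.
    - intros a b Ha Hb. apply HP; auto. }
  assert (F1 : filter_prod (at_right 0) (Rbar_locally p_infty) (fun ab : R * R => fst ab <= snd ab)).
  { apply Hfp. intros a b Ha Hb; simpl; lra. }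
  assert (F2 : filter_prod (at_right 0) (Rbar_locally p_infty)
     (fun ab : R * R => forall x : R, fst ab <= x <= snd ab ->
        norm (minus (minus (ig nu n (k + h) x) (ig nu n k x)) (scal h (ig nu (S n) k x)))
        <= scal (h ^ 2) (ig nu (S (S n)) (k + 1) x))).
  { apply Hfp. intros a b Ha Hb x Hx; simpl in Hx. apply (ig_pointwise nu n k h x); [lra|auto]. }
  exact (RInt_gen_norm _ _ _ _ F1 F2 H1 H2).
Qed.

Lemma I_deriv nu n k : 0 < nu -> is_derive (Iint nu n) k (Iint nu (S n) k).
Proof.
  intros Hnu. apply is_derive_Reals. intros eps Heps.
  destruct (I_spec nu (S (S n)) (k + 1) Hnu) as [_ HC].
  set (C := Iint nu (S (S n)) (k + 1)) in *.
  assert (Hd : 0 < Rmin 1 (eps / (2 * C))).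
  { apply Rmin_pos. lra. apply Rdiv_lt_0_compat; lra. }
  exists (mkposreal _ Hd). intros h Hh0 Hhd. simpl in Hhd.
  assert (Hh1 : Rabs h <= 1) by (pose proof (Rmin_l 1 (eps / (2 * C))); lra).
  assert (Hh2 : Rabs h < eps / (2 * C)) by (pose proof (Rmin_r 1 (eps / (2 * C))); lra).
  pose proof (I_bound nu n k h Hnu Hh1) as HB. fold C in HB.
  replace ((Iint nu n (k + h) - Iint nu n k) / h - Iint nu (S n) k)
    with ((Iint nu n (k + h) - Iint nu n k - h * Iint nu (S n) k) / h) by (field; auto).
  unfold Rdiv. rewrite Rabs_mult, Rabs_inv.
  assert (Ha : 0 < Rabs h) by (apply Rabs_pos_lt; auto).
  apply (Rmult_lt_reg_r (Rabs h)); auto.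
  rewrite Rmult_assoc, Rinv_l by lra. rewrite Rmult_1_r.
  assert (h ^ 2 = Rabs h * Rabs h) by (rewrite <- Rabs_mult; simpl; rewrite Rmult_1_r; rewrite Rabs_right; [ring| apply Rle_ge; nra]).
  assert (Rabs h * C < eps / 2).
  { apply (Rmult_lt_reg_r (/ C)). apply Rinv_0_lt_compat; auto.
    rewrite Rmult_assoc, Rinv_r by lra. replace (eps / 2 * / C) with (eps / (2 * C)) by (field; lra). lra. }
  nra.
Qed.

Lemma psi_eq a b sigma rho : 0 < b -> 0 < sigma -> 0 < rho ->
  psi a b sigma rho = fun x => / Gint (rho / b) * Iint (rho / b) 0 ((b * x - a) / (sigma * b) * sqrt (2 * b)).
Proof.
  intros Hb Hs Hr. apply functional_extensionality. intros x.
  unfold psi, D_par, Gamma_fn, Gint, Iint, ig.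
  replace (- (- rho / b)) with (rho / b) by (field; lra).
  set (k := (b * x - a) / (sigma * b) * sqrt (2 * b)).
  replace (fun t => Rpower t (rho / b - 1) * exp (- t ^ 2 / 2 - - (b * x - a) / (sigma * b) * sqrt (2 * b) * t))
    with (fun t => Rpower t (rho / b - 1) * (t ^ 0 * exp (- t ^ 2 / 2 + k * t))).
  2: { apply functional_extensionality; intro t. unfold k. f_equal. simpl. rewrite Rmult_1_l. f_equal.
       field. lra. }
  set (J := RInt_gen _ _ _). set (G := RInt_gen _ _ _).
  assert (HE : exp ((b * x - a) ^ 2 / (2 * sigma ^ 2 * b)) *
     exp (- (- (b * x - a) / (sigma * b) * sqrt (2 * b)) ^ 2 / 4) = 1).
  { rewrite <- exp_plus. rewrite <- exp_0. f_equal.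
    replace ((- (b * x - a) / (sigma * b) * sqrt (2 * b)) ^ 2) with (((b * x - a) / (sigma * b))^2 * sqrt (2 * b) ^ 2) by (unfold Rdiv; ring).
    rewrite pow2_sqrt by lra. field. lra. }
  match goal with |- ?e1 * (?e2 / ?J * ?G) = _ => 
    transitivity ((e1 * e2) * (/ J * G)); [unfold Rdiv; ring | rewrite HE; ring] end.
Qed.

Lemma deriv_comb (P R : R -> R) q dR c y : is_derive P y q -> is_derive R y dR ->
  is_derive (fun y => (y - c) * P y - R y) y (P y + (y - c) * q - dR).
Proof.
  intros HP HR.
  assert (Hl : is_derive (fun y => y - c) y 1) by (auto_derive; auto; ring).
  pose proof (is_derive_mult _ _ _ _ _ Hl HP ltac:(intros; apply Rmult_comm)) as HM.
  pose proof (is_derive_minus _ _ _ _ _ HM HR) as H.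
  eapply is_derive_ext; [intros; reflexivity|].
  replace (P y + (y - c) * q - dR) with (minus (plus (mult 1 (P y)) (mult (y - c) q)) dR).
  exact H.
  unfold minus, plus, mult, opp; simpl. unfold mult; simpl. ring.
Qed.

Section Main.
Variables (a b sigma rho : R).
Hypotheses (hb : 0 < b) (hsigma : 0 < sigma) (hrho : 0 < rho).

Let nu := rho / b.
Let s := b / (sigma * b) * sqrt (2 * b).
Let kf x := (b * x - a) / (sigma * b) * sqrt (2 * b).
Let Cc := / Gint nu.
Definition Pn n x := Cc * s ^ n * Iint nu n (kf x).

Lemma nu_pos : 0 < nu. Proof. unfold nu. apply Rdiv_lt_0_compat; lra. Qed.
Lemma s_pos : 0 < s.
Proof. unfold s. apply Rmult_lt_0_compat. apply Rdiv_lt_0_compat; nra. apply sqrt_lt_R0; lra. Qed.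
Lemma Cc_pos : 0 < Cc. Proof. unfold Cc. apply Rinv_0_lt_compat, G_pos, nu_pos. Qed.

Lemma Pn_pos n x : 0 < Pn n x.
Proof.
  unfold Pn. apply Rmult_lt_0_compat. apply Rmult_lt_0_compat. apply Cc_pos. apply pow_lt, s_pos.
  apply (I_spec nu n _ nu_pos).
Qed.

Lemma kf_deriv x : is_derive kf x s.
Proof. unfold kf, s. auto_derive. auto. field. split; lra. Qed.

Lemma Pn_deriv n x : is_derive (Pn n) x (Pn (S n) x).
Proof.
  pose proof (is_derive_comp (Iint nu n) kf x _ _ (I_deriv nu n (kf x) nu_pos) (kf_deriv x)) as H.
  pose proof (is_derive_scal _ x (Cc * s ^ n) _ H) as H2.
  unfold Pn. replace (Cc * s ^ S n * Iint nu (S n) (kf x)) with (Cc * s ^ n * scal s (Iint nu (S n) (kf x))).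
  exact H2.
  unfold scal; simpl; unfold mult; simpl. ring.
Qed.

Lemma psi_Pn : psi a b sigma rho = Pn 0.
Proof.
  rewrite psi_eq by auto. apply functional_extensionality; intro x. unfold Pn, Cc, kf, nu. simpl. ring.
Qed.

Lemma Dpsi_Pn : Derive (psi a b sigma rho) = Pn 1.
Proof.
  rewrite psi_Pn. apply functional_extensionality; intro x. apply is_derive_unique, Pn_deriv.
Qed.

Lemma DDpsi_Pn : Derive (Derive (psi a b sigma rho)) = Pn 2.
Proof.
  rewrite Dpsi_Pn. apply functional_extensionality; intro x. apply is_derive_unique, Pn_deriv.
Qed.

End Main.

Theorem corollary4p6 (a b sigma rho c x0 xinf : R)
  (hb : 0 < b) (hsigma : 0 < sigma) (hrho : 0 < rho) (hc : 0 < c)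
  (hx0 : c < x0)
  (hx0root : (x0 - c) * Derive (psi a b sigma rho) x0 - psi a b sigma rho x0 = 0)
  (hx0uniq : forall y, c < y ->
     (y - c) * Derive (psi a b sigma rho) y - psi a b sigma rho y = 0 -> y = x0)
  (hxinf : c < xinf)
  (hxinfroot : (xinf - c) * Derive_n (psi a b sigma rho) 2 xinf
               - Derive (psi a b sigma rho) xinf = 0)
  (hxinfuniq : forall y, c < y ->
     (y - c) * Derive_n (psi a b sigma rho) 2 y - Derive (psi a b sigma rho) y = 0 ->
     y = xinf) :
  (forall x, x < x0 ->
     (x - c) * Derive (psi a b sigma rho) x - psi a b sigma rho x < 0) /\
  (forall x, xinf < x ->
     (x - c) * Derive_n (psi a b sigma rho) 2 x - Derive (psi a b sigma rho) x > 0).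
Proof.
  change (Derive_n (psi a b sigma rho) 2) with (Derive (Derive (psi a b sigma rho))) in *.
  rewrite (DDpsi_Pn a b sigma rho hb hsigma hrho) in *.
  rewrite (Dpsi_Pn a b sigma rho hb hsigma hrho) in *.
  rewrite (psi_Pn a b sigma rho hb hsigma hrho) in *.
  set (P := Pn a b sigma rho) in *.
  assert (Ppos : forall n x, 0 < P n x) by (intros; apply Pn_pos; auto).
  assert (Pd : forall n x, is_derive (P n) x (P (S n) x)) by (intros; apply Pn_deriv; auto).
  split.
  - intros x Hx. destruct (Rle_or_lt x c) as [Hxc|Hxc].
    + pose proof (Ppos 1%nat x). pose proof (Ppos 0%nat x).
      assert ((x - c) * P 1%nat x <= 0) by (apply Rmult_le_0_r; lra). lra.
    + destruct (MVT_cor2 (fun y => (y - c) * P 1%nat y - P 0%nat y)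
                  (fun y => P 1%nat y + (y - c) * P 2%nat y - P 1%nat y) x x0 Hx) as [xi [Hxi1 Hxi2]].
      { intros y Hy. apply is_derive_Reals. apply deriv_comb; apply Pd. }
      simpl in Hxi1. pose proof (Ppos 2%nat xi).
      assert (0 < (xi - c) * P 2%nat xi * (x0 - x)) by (apply Rmult_lt_0_compat; [apply Rmult_lt_0_compat|]; lra).
      lra.
  - intros x Hx.
    destruct (MVT_cor2 (fun y => (y - c) * P 2%nat y - P 1%nat y)
                  (fun y => P 2%nat y + (y - c) * P 3%nat y - P 2%nat y) xinf x Hx) as [xi [Hxi1 Hxi2]].
    { intros y Hy. apply is_derive_Reals. apply deriv_comb; apply Pd. }
    simpl in Hxi1. pose proof (Ppos 3%nat xi).
    assert (0 < (xi - c) * P 3%nat xi * (x - xinf)) by (apply Rmult_lt_0_compat; [apply Rmult_lt_0_compat|]; lra).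
    lra.
Qed.
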